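(* If $u$ is a word such that the attribute $(x_i,y_i)$ of every position $i$ satisfies $x_i + y_i \leq k+1$, then $u$ has minimal length within its $\sim_k$-class.
   Context: $A$ is a finite alphabet and $k\in\mathbb{N}$. Simon's congruence $u\sim_k v$ holds iff $u$ and $v$ have the same (scattered) subwords of length at most $k$. An $\mathsf{X}$-ranker is a nonempty word over $\{\mathsf{X}_a : a\in A\}$ (''go to the next $a$-position'', starting with the first $a$-position) and a $\mathsf{Y}$-ranker a nonempty word over $\{\mathsf{Y}_a : a\in A\}$ (''go to the previous $a$-position'', starting with the last $a$-position). The attribute of position $i$ is $(x_i,y_i)$, where $x_i$ (resp. $y_i$) is the length of a shortest $\mathsf{X}$-ranker (resp. $\mathsf{Y}$-ranker) reaching $i$. *)

(* Defs.v *)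
(* Words over a finite alphabet A are [seq A]; positions are 0-indexed. *)
From mathcomp Require Import all_boot.
Set Implicit Arguments. Unset Strict Implicit. Unset Printing Implicit Defensive.

Section Rankers.
Variable A : finType.

Definition simon (k : nat) (u v : seq A) : Prop :=
  forall w : seq A, size w <= k -> subseq w u = subseq w v.

Definition next_pos (u : seq A) (a : A) (from : nat) : option nat :=
  let j := from + find (pred1 a) (drop from u) in
  if j < size u then Some j else None.

Definition prev_pos (u : seq A) (a : A) (bound : nat) : option nat :=
  let t := take bound u in
  let f := find (pred1 a) (rev t) in
  if f < size t then Some ((size t).-1 - f) else None.

(* X-ranker X_{a1} ... X_{an} (letters applied left to right): X_{a1} goes to
   the first a1-position, each further X_a to the next a-position strictly after
   the current one. The empty word is not a ranker (evaluates to None). *)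
Fixpoint xrun (u : seq A) (from : nat) (r : seq A) : option nat :=
  match r with
  | [::] => None
  | a :: r' =>
      match next_pos u a from with
      | None => None
      | Some j => if r' is [::] then Some j else xrun u j.+1 r'
      end
  end.
Definition xeval (u r : seq A) : option nat := xrun u 0 r.

(* Y-ranker: Y_{a1} goes to the last a1-position, each further Y_a to the
   previous a-position strictly before the current one. *)
Fixpoint yrun (u : seq A) (bound : nat) (r : seq A) : option nat :=
  match r with
  | [::] => None
  | a :: r' =>
      match prev_pos u a bound with
      | None => None
      | Some j => if r' is [::] then Some j else yrun u j r'
      end
  end.
Definition yeval (u r : seq A) : option nat := yrun u (size u) r.

Fixpoint words (n : nat) : seq (seq A) :=
  if n is n'.+1 then [seq a :: w | a <- enum A, w <- words n'] else [:: [::]].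

(* x_i: length of a shortest X-ranker reaching position i (a shortest one has
   length at most size u, so searching lengths 0..size u suffices). *)
Definition xattr (u : seq A) (i : nat) : nat :=
  find (fun n => has (fun r => xeval u r == Some i) (words n)) (iota 0 (size u).+1).
Definition yattr (u : seq A) (i : nat) : nat :=
  find (fun n => has (fun r => yeval u r == Some i) (words n)) (iota 0 (size u).+1).

End Rankers.

(* Main.v *)
Require Import Defs.
From mathcomp Require Import all_boot zify.
Set Implicit Arguments. Unset Strict Implicit.

Lemma mem_words (A : finType) n (r : seq A) : (r \in words A n) = (size r == n).
Proof.
elim: n r => [|n IH] [|a r] //=.
- by apply/negP => /allpairsP [[b w] [_ _]].
- apply/allpairsP/idP.
  + case=> [[b w]] /= [_ Hw E]; case: E => _ ->; by rewrite eqSS -IH.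
  + move=> Hr; exists (a, r); split => //=; [by rewrite mem_enum | by rewrite IH -eqSS].
Qed.

Lemma subseq_notin_cat (A : eqType) (a : A) r x y :
  a \notin x -> subseq (a :: r) (x ++ y) = subseq (a :: r) y.
Proof.
elim: x => [|b x IH] //=; rewrite in_cons negb_or => /andP[Hab Hx].
by rewrite (negbTE Hab) IH.
Qed.

Lemma xrun_sem (A : finType) (u : seq A) r from i :
  xrun u from r = Some i ->
  [/\ from <= i, i < size u,
      subseq r (take (i.+1 - from) (drop from u)) &
      ~~ subseq r (take (i - from) (drop from u))].
Proof.
elim: r from => [|a r IH] from //=.
rewrite /next_pos.
set f := find _ _.
case: ifP => // Hj.
have Hf : f < size (drop from u) by rewrite size_drop; lia.
have Hhas : has (pred1 a) (drop from u) by rewrite has_find.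
have Hnth : nth a (drop from u) f = a by have := nth_find a Hhas => /eqP.
have Hbef : a \notin take f (drop from u).
  apply/negP => /(nthP a) [m Hm Hm2].
  rewrite size_take Hf in Hm.
  rewrite nth_take // in Hm2.
  by have := before_find a Hm; rewrite /= Hm2 eqxx.
have Hsplit : drop from u = take f (drop from u) ++ a :: drop (from + f).+1 u.
  rewrite -{1}(cat_take_drop f (drop from u)); congr (_ ++ _).
  rewrite (drop_nth a Hf) Hnth drop_drop; congr (_ :: drop _ _); lia.
case: r IH => [|b r] IH.
- case=> <-; split; [lia|lia| |].
  + rewrite Hsplit take_cat size_take Hf ltnNge.
    have -> : (f <= (from + f).+1 - from) = true by lia.
    rewrite /=. have -> : (from + f).+1 - from - f = 1 by lia.
    rewrite /=. apply: (subseq_trans _ (suffix_subseq _ _)).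
    by rewrite /= eqxx sub0seq.
  + have -> : from + f - from = f by lia.
    by rewrite sub1seq.
- move=> /IH [H1 H2 H3 H4]; split; [lia|lia| |].
  + rewrite Hsplit take_cat size_take Hf ltnNge.
    have -> : (f <= i.+1 - from) = true by lia.
    have -> : i.+1 - from - f = (i - (from + f).+1).+1.+1 by lia.
    rewrite /=. apply: (subseq_trans _ (suffix_subseq _ _)).
    rewrite /= eqxx. by have <- : i.+1 - (from + f).+1 = (i - (from + f).+1).+1 by lia.
  + rewrite Hsplit take_cat size_take Hf ltnNge.
    have -> : (f <= i - from) = true by lia.
    have -> : i - from - f = (i - (from + f).+1).+1 by lia.
    by rewrite subseq_notin_cat //= eqxx.
Qed.
Lemma xrun_prefix (A : finType) (u : seq A) (x0 : A) d j :
  j + d < size u -> xrun u j (take d.+1 (drop j u)) = Some (j + d).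
Proof.
elim: d j => [|d IH] j Hjd.
- rewrite (drop_nth x0) /=; last lia.
  rewrite /next_pos (drop_nth x0) /=; last lia.
  rewrite eqxx addn0 ifT ?take0 //; lia.
- rewrite (drop_nth x0) /=; last lia.
  rewrite /next_pos (drop_nth x0) /=; last lia.
  rewrite eqxx addn0 ifT; last lia.
  rewrite IH; last lia.
  rewrite [drop j.+1 u](drop_nth x0) /=; last lia.
  congr Some; lia.
Qed.

Lemma xeval_prefix (A : finType) (u : seq A) i :
  i < size u -> xeval u (take i.+1 u) = Some i.
Proof.
case: u => [|x0 u'] // Hi.
by rewrite /xeval -{1}(drop0 (x0 :: u')) (xrun_prefix x0) ?add0n.
Qed.

Lemma next_pos_lt (A : finType) (w : seq A) a f j :
  next_pos w a f = Some j -> j < size w.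
Proof. by rewrite /next_pos; case: ifP => // H [<-]. Qed.

Lemma prev_next (A : finType) (u : seq A) a bound : bound <= size u ->
  prev_pos u a bound =
  omap (fun j => size u - j.+1) (next_pos (rev u) a (size u - bound)).
Proof.
move=> Hb; rewrite /prev_pos /next_pos drop_rev size_rev subKn // size_takel //.
set f := find _ _.
case: ifP => Hf; case: ifP => Hf2 //=; try lia.
congr Some; lia.
Qed.

Lemma yrun_xrun (A : finType) (u : seq A) s bound : bound <= size u ->
  yrun u bound s = omap (fun j => size u - j.+1) (xrun (rev u) (size u - bound) s).
Proof.
elim: s bound => [|a s IH] bound Hb //=.
rewrite prev_next //.
case E: (next_pos _ _ _) => [j|] //=.
have Hj := next_pos_lt E; rewrite size_rev in Hj.
case: s IH => [|b s] IH //.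
rewrite IH; last lia.
by have -> : size u - (size u - j.+1) = j.+1 by lia.
Qed.

Lemma yeval_sem (A : finType) (u : seq A) s i :
  yeval u s = Some i ->
  [/\ i < size u, subseq (rev s) (drop i u) & ~~ subseq (rev s) (drop i.+1 u)].
Proof.
rewrite /yeval yrun_xrun // subnn.
case E: (xrun _ _ _) => [j|] //= [<-].
have [_ Hj H1 H2] := xrun_sem E.
rewrite size_rev in Hj.
rewrite drop0 !subn0 !take_rev in H1 H2.
split; first lia.
- by rewrite -subseq_rev revK.
- have -> : (size u - j.+1).+1 = size u - j by lia.
  by rewrite -subseq_rev revK.
Qed.

Lemma yeval_suffix (A : finType) (u : seq A) i :
  i < size u -> yeval u (rev (drop i u)) = Some i.
Proof.
case: u => [|x0 u'] // Hi.
set u := x0 :: u' in Hi *.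
rewrite /yeval yrun_xrun // subnn rev_drop.
have -> : size u - i = (size u - i.+1).+1 by lia.
rewrite -{2}(drop0 (rev u)) (xrun_prefix x0); last by rewrite size_rev; lia.
congr Some; lia.
Qed.

Lemma xattr_wit (A : finType) (u : seq A) i : i < size u ->
  exists r, size r = xattr u i /\ xeval u r = Some i.
Proof.
move=> Hi.
set p := fun n => has (fun r => xeval u r == Some i) (words A n).
have Hhas : has p (iota 0 (size u).+1).
  apply/hasP; exists i.+1; first by rewrite mem_iota; lia.
  apply/hasP; exists (take i.+1 u); first by rewrite mem_words size_takel.
  by rewrite xeval_prefix.
have := nth_find 0 Hhas.
rewrite nth_iota; last by move: Hhas; rewrite has_find size_iota.
rewrite add0n => /hasP [r Hr /eqP Hx].
by exists r; split => //; move: Hr; rewrite mem_words => /eqP.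
Qed.

Lemma yattr_wit (A : finType) (u : seq A) i : i < size u ->
  exists r, size r = yattr u i /\ yeval u r = Some i.
Proof.
move=> Hi.
set p := fun n => has (fun r => yeval u r == Some i) (words A n).
have Hhas : has p (iota 0 (size u).+1).
  apply/hasP; exists (size u - i); first by rewrite mem_iota; lia.
  apply/hasP; exists (rev (drop i u)); first by rewrite mem_words size_rev size_drop.
  by rewrite yeval_suffix.
have := nth_find 0 Hhas.
rewrite nth_iota; last by move: Hhas; rewrite has_find size_iota.
rewrite add0n => /hasP [r Hr /eqP Hx].
by exists r; split => //; move: Hr; rewrite mem_words => /eqP.
Qed.

Lemma size_sum_count (A : finType) (s : seq A) :
  size s = \sum_(a : A) count_mem a s.
Proof.
elim: s => [|x s IH] /=.
- by rewrite big1.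
- rewrite big_split /= -IH (bigD1 x) //= eqxx big1 ?addn0 ?add1n // => a Ha.
  by rewrite eq_sym (negbTE Ha).
Qed.

Lemma subseq_split (A : eqType) (s1 s2 w : seq A) :
  subseq (s1 ++ s2) w -> exists Q, subseq s1 (take Q w) /\ subseq s2 (drop Q w).
Proof.
elim: w s1 => [|c w IH] s1.
- by case: s1 => //; case: s2 => // _; exists 0.
- case: s1 => [|b s1] H; first by exists 0; rewrite drop0.
  move: H => /=; case: eqP => [-> | Hbc] H.
  + have [Q [H1 H2]] := IH _ H; exists Q.+1 => /=; by rewrite eqxx.
  + have [Q [H1 H2]] := IH (b :: s1) H; exists Q.+1 => /=.
    by case: eqP => // _.
Qed.

Lemma take_mono (A : eqType) (w : seq A) Q P : Q <= P -> subseq (take Q w) (take P w).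
Proof. by move=> H; rewrite -(take_takel w H) take_subseq. Qed.

Lemma drop_mono (A : eqType) (w : seq A) Q P : Q <= P -> subseq (drop P w) (drop Q w).
Proof. by move=> H; rewrite -(subnK H) -drop_drop drop_subseq. Qed.

Lemma rcons_sub (A : eqType) (s t : seq A) c b :
  subseq (rcons s c) (rcons t b) = if c == b then subseq s t else subseq (rcons s c) t.
Proof.
rewrite -subseq_rev !rev_rcons /=.
by case: eqP => _; [rewrite subseq_rev | rewrite -rev_rcons subseq_rev].
Qed.

Lemma subseq_notin_catr (A : eqType) (a : A) s x y :
  a \notin y -> subseq (rcons s a) (x ++ y) = subseq (rcons s a) x.
Proof.
move=> Hy; rewrite -subseq_rev rev_cat rev_rcons subseq_notin_cat ?mem_rev //.
by rewrite -rev_rcons subseq_rev.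
Qed.

Lemma cnt_pos (A : eqType) (a : A) s : a \in s -> 0 < count_mem a s.
Proof. by rewrite -has_pred1 has_count. Qed.

Lemma rcons_count (A : eqType) (s w : seq A) a :
  subseq (rcons s a) w -> exists Q, subseq s (take Q w) /\ count_mem a (take Q w) < count_mem a w.
Proof.
rewrite -cats1 => /subseq_split [Q [H1 H2]]; exists Q; split => //.
rewrite -{2}(cat_take_drop Q w) count_cat -addn1 leq_add2l.
by apply: cnt_pos; rewrite -sub1seq.
Qed.

Lemma last_occ (A : eqType) (a : A) s : a \in s ->
  exists i, [/\ i < size s, nth a s i = a & a \notin drop i.+1 s].
Proof.
elim/last_ind: s => [|t c IH] //.
rewrite mem_rcons in_cons; case: eqP => [<- _ | Hc /= Ht].
- exists (size t); rewrite size_rcons nth_rcons ltnn eqxx drop_oversize //.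
  by rewrite size_rcons.
- have [i [H1 H2 H3]] := IH Ht; exists i.
  rewrite size_rcons nth_rcons H1 drop_rcons // mem_rcons in_cons negb_or H3 andbT.
  split => //; first lia.
  by apply/eqP => E; apply: Hc.
Qed.

Definition Xw (A : eqType) (u : seq A) i al := subseq al (take i.+1 u) && ~~ subseq al (take i u).
Definition Yw (A : eqType) (u : seq A) i be := subseq be (drop i u) && ~~ subseq be (drop i.+1 u).

Lemma Xw_last (A : eqType) (u : seq A) i al x0 : i < size u -> Xw u i al ->
  exists d, al = rcons d (nth x0 u i) /\ subseq d (take i u).
Proof.
move=> Hi /andP[H1 H2]; rewrite (take_nth x0 Hi) in H1.
case/lastP: al H1 H2 => [|d c]; first by move=> _; rewrite sub0seq.
rewrite rcons_sub; case: eqP => [-> H1 _ | _ H1 H2]; first by exists d.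
by rewrite H1 in H2.
Qed.

Lemma Yw_head (A : eqType) (u : seq A) i be x0 : i < size u -> Yw u i be ->
  exists d, be = nth x0 u i :: d /\ subseq d (drop i.+1 u).
Proof.
move=> Hi /andP[H1 H2]; rewrite (drop_nth x0 Hi) in H1.
case: be H1 H2 => [|c d]; first by move=> _; rewrite sub0seq.
rewrite /=; case: eqP => [-> H1 _ | _ H1 H2]; first by exists d.
by rewrite H1 in H2.
Qed.

Lemma witnesses (A : finType) (k : nat) (u : seq A) :
  (forall i, i < size u -> xattr u i + yattr u i <= k.+1) ->
  forall i, i < size u -> exists al be, [/\ Xw u i al, Yw u i be & size al + size be <= k.+1].
Proof.
move=> H i Hi.
have [r [Hr Hxr]] := xattr_wit Hi.
have [s [Hs Hys]] := yattr_wit Hi.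
have [_ _ H1 H2] := xrun_sem Hxr.
have [_ H3 H4] := yeval_sem Hys.
exists r, (rev s); split.
- by rewrite /Xw; rewrite drop0 !subn0 in H1 H2; rewrite H1 H2.
- by rewrite /Yw H3 H4.
- by rewrite size_rev Hr Hs H.
Qed.

Lemma main_letter (A : finType) (k : nat) (u v : seq A) (a : A) :
  simon k u v ->
  (forall i, i < size u -> exists al be, [/\ Xw u i al, Yw u i be & size al + size be <= k.+1]) ->
  forall j, j < size u -> nth a u j = a ->
  exists al be, [/\ Xw u j al, Yw u j be, size al + size be <= k.+1 &
    forall P, subseq al (take P v) -> count_mem a (take j.+1 u) <= count_mem a (take P v)].
Proof.
move=> Hsim Hw j; elim/ltn_ind: j => j IH Hj Haj.
have [al' [be' [Hxa' Hyb' Hsz']]] := Hw j Hj.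
have [ga [Ega Hga]] := Xw_last a Hj Hxa'.
rewrite Haj in Ega.
have Htj : take j.+1 u = rcons (take j u) a by rewrite (take_nth a Hj) Haj.
case Hin: (a \in take j u); last first.
  exists al', be'; split => // P HP.
  rewrite Htj -cats1 count_cat (count_memPn (negbT Hin)) /=. rewrite eqxx.
  apply: cnt_pos; apply: (mem_subseq HP); by rewrite Ega mem_rcons mem_head.
have [i [Hi1 Hi2 Hi3]] := last_occ Hin.
rewrite size_take Hj in Hi1.
rewrite nth_take // in Hi2.
have Hiu : i < size u by lia.
have [ali [bei [Hxi Hyi Hszi Hci]]] := IH i Hi1 Hiu Hi2.
have F1 : take j u = take i.+1 u ++ drop i.+1 (take j u).
  by rewrite -{1}(cat_take_drop i.+1 (take j u)) take_takel.
have F2 : count_mem a (take j.+1 u) = (count_mem a (take i.+1 u)).+1.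
  rewrite Htj -cats1 count_cat {1}F1 count_cat (count_memPn Hi3) /= eqxx; lia.
have Hti : take i.+1 u = rcons (take i u) a by rewrite (take_nth a Hiu) Hi2.
have [bb [Ebb Hbb]] := Yw_head a Hiu Hyi.
rewrite Hi2 in Ebb.
case: (leqP (size ali + 1 + size be') k.+1) => Hcase.
-
  exists (rcons ali a), be'; split => //.
  + apply/andP; split.
    * rewrite Htj rcons_sub eqxx.
      apply: (subseq_trans _ (take_mono u (_ : i.+1 <= j))); last lia.
      by case/andP: Hxi.
    * rewrite F1 subseq_notin_catr // Hti rcons_sub eqxx.
      by case/andP: Hxi.
  + by rewrite size_rcons; lia.
  + move=> P /rcons_count [Q [HQ1 HQ2]].
    rewrite -take_min in HQ1 HQ2.
    have := Hci _ HQ1; rewrite F2 => H; exact: leq_ltn_trans H HQ2.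
-
  exists al', be'; split => //.
  have Hbne : ~~ subseq (ga ++ bei) u.
    apply/negP => /subseq_split [Q [HQ1 HQ2]].
    case: (leqP i.+1 Q) => HQ.
    + by move: Hyi => /andP [_ /negP]; apply; apply: (subseq_trans HQ2); apply: drop_mono.
    + move: Hxa' => /andP [_ /negP]; apply.
      rewrite Ega.
      apply: (subseq_trans _ (take_mono u (_ : i.+1 <= j))); last lia.
      rewrite Hti rcons_sub eqxx.
      by apply: (subseq_trans HQ1); apply: take_mono; lia.
  have Hszge : size ga + size bei <= k.
    move: Hsz' Hszi; rewrite Ega size_rcons; lia.
  have Hv1 : ~~ subseq (ga ++ bei) v by rewrite -Hsim ?size_cat.
  have Hv2 : subseq (ali ++ bb) v.
    rewrite -Hsim; last by move: Hszi; rewrite Ebb /= size_cat; lia.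
    rewrite -(cat_take_drop i.+1 u); apply: cat_subseq => //.
    by case/andP: Hxi.
  move=> P; rewrite Ega => /rcons_count [Q [HQ1 HQ2]].
  rewrite -take_min in HQ1 HQ2.
  set Q' := minn Q P in HQ1 HQ2.
  suff Hsub : subseq ali (take Q' v) by have := Hci _ Hsub; rewrite F2 => H; exact: leq_ltn_trans H HQ2.
  apply: contraT => Hn.
  have [R [HR1 HR2]] := subseq_split Hv2.
  have exR : exists R, subseq ali (take R v) by exists R.
  case: (ex_minnP exR) => R0 HR0 Hmin.
  have HR0R := Hmin _ HR1.
  have HQR0 : Q' < R0.
    rewrite ltnNge; apply/negP => HR0Q; move/negP: Hn; apply.
    by apply: (subseq_trans HR0); apply: take_mono.
  case: R0 HR0 Hmin HR0R HQR0 => [|R1] //= HR0 Hmin HR0R HQR0.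
  have HR1v : R1 < size v.
    rewrite ltnNge; apply/negP => Hge.
    have E1 : take R1 v = v by apply: take_oversize.
    have E2 : take R1.+1 v = v by apply: take_oversize; apply: (leq_trans Hge).
    rewrite E2 -E1 in HR0.
    by have := Hmin _ HR0; rewrite ltnn.
  have [dd [Edd Hdd]] := Xw_last a Hiu Hxi.
  rewrite Hi2 in Edd.
  have Hva : nth a v R1 = a.
    move: HR0; rewrite (take_nth a HR1v) Edd rcons_sub.
    case: eqP => // _ H; rewrite -Edd in H.
    by have := Hmin _ H; rewrite ltnn.
  suff Hs : subseq (ga ++ bei) v by rewrite Hs in Hv1.
  rewrite Ebb -(cat_take_drop R1 v) (drop_nth a HR1v) Hva.
  apply: cat_subseq; first by apply: (subseq_trans HQ1); apply: take_mono; rewrite -ltnS.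
  rewrite /= eqxx; apply: (subseq_trans HR2); exact: drop_mono HR0R.
Qed.

Lemma count_le (A : finType) (k : nat) (u v : seq A) (a : A) :
  simon k u v ->
  (forall i, i < size u -> exists al be, [/\ Xw u i al, Yw u i be & size al + size be <= k.+1]) ->
  count_mem a u <= count_mem a v.
Proof.
move=> Hsim Hw.
case Hin: (a \in u); last by rewrite (count_memPn (negbT Hin)).
have [i [Hi1 Hi2 Hi3]] := last_occ Hin.
have [al [be [Hx Hy Hsz Hc]]] := main_letter Hsim Hw Hi1 Hi2.
have Hbe : 0 < size be.
  case: be Hy Hsz {Hc} => // /andP [_]; by rewrite sub0seq.
have Hal : subseq al v.
  rewrite -Hsim; last by rewrite -ltnS; apply: leq_trans Hsz; rewrite -addn1 leq_add2l.
  case/andP: Hx => H _; apply: (subseq_trans H); exact: take_subseq.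
have := Hc (size v); rewrite take_size => /(_ Hal).
have E : count_mem a u = count_mem a (take i.+1 u).
  by rewrite -{1}(cat_take_drop i.+1 u) count_cat (count_memPn Hi3) addn0.
by rewrite E.
Qed.

Theorem theorem8 (A : finType) (k : nat) (u : seq A) :
  (forall i, i < size u -> xattr u i + yattr u i <= k.+1) ->
  forall v : seq A, simon k u v -> size u <= size v.
Proof.
move=> H v Hsim.
have Hw := witnesses H.
rewrite !size_sum_count; apply: leq_sum => a _.
exact: count_le Hsim Hw.
Qed.
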